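(* For any boolean function $f:\{0,1\}^n\to\{0,1\}$, \[ Q_E^{na}(f)=\min_{x\in\{0,1\}^n}\max_{y\in S_f^\perp} d(x,y), \] i.e.\ $Q_E^{na}(f)$ equals the covering radius of the binary linear code $S_f^\perp$.
   Context: Addition of bit strings is in $\mathbb Z_2^n$ (bitwise mod 2). $S_f:=\{z\in\{0,1\}^n: f(x)=f(x+z)\ \text{for all } x\}$, a subspace of $\mathbb F_2^n$. For a subspace $S$, $S^\perp=\{x: x\cdot s=0 \text{ for all } s\in S\}$, with $x\cdot s=\sum_i x_is_i \bmod 2$. $d(x,y)$ is the Hamming distance. Nonadaptive exact quantum query model: let $\mathcal H_{\rm in}$ have orthonormal basis $|0\rangle,\dots,|n\rangle$ and let the oracle $O_x$ act by $|i\rangle\mapsto(-1)^{x_i}|i\rangle$ with convention $x_0=0$. A nonadaptive quantum algorithm making $k$ queries consists of an input-independent state $|\psi\rangle\in\mathcal H_{\rm in}^{\otimes k}\otimes\mathcal H_{\rm work}$ (with $\mathcal H_{\rm work}$ a finite-dimensional workspace), to which $O_x^{\otimes k}\otimes I$ is applied, followed by an input-independent two-outcome measurement with outcomes labelled $0,1$. It computes $f$ exactly if for every $x$ the outcome is $f(x)$ with probability $1$. $Q_E^{na}(f)$ is the minimum such $k$. *)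

(* Defs.v *)
From HB Require Import structures.
From mathcomp Require Import all_boot all_order all_algebra.
Set Implicit Arguments. Unset Strict Implicit. Unset Printing Implicit Defensive.
Import Order.TTheory GRing.Theory Num.Theory.

Definition bits (n : nat) := {ffun 'I_n -> bool}.

Definition badd n (x y : bits n) : bits n := [ffun i => x i (+) y i].

Definition bdot n (x s : bits n) : bool := odd (\sum_(i < n) (x i && s i)).

Definition hdist n (x y : bits n) : nat := #|[set i : 'I_n | x i != y i]|.

Definition Sf n (f : bits n -> bool) : {set bits n} :=
  [set z | [forall x, f x == f (badd x z)]].

Definition perp n (S : {set bits n}) : {set bits n} :=
  [set y | [forall s in S, ~~ bdot y s]].

(* All distances are <= n, so
   n is a neutral element for the minimum; the max over the (nonempty, it
   contains 0) set S^perp uses the nat \max with default 0. *)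
Definition minmax_dist n (S : {set bits n}) : nat :=
  \big[minn/n]_(x : bits n) \max_(y in perp S) hdist x y.

(* Query index i in {0,...,n} (basis |0>,...,|n> of H_in); convention x_0 = 0,
   and x_i (1 <= i <= n) is the (i-1)-th entry of x : bits n. *)
Definition xq n (x : bits n) (i : 'I_n.+1) : bool :=
  match unlift ord0 i with Some j => x j | None => false end.

(* Basis of H_in^{(x)k} (x) H_work, with dim H_work = w. *)
Definition basis (n k w : nat) := ({ffun 'I_k -> 'I_n.+1} * 'I_w)%type.

Local Open Scope ring_scope.

(* State after applying O_x^{(x)k} (x) I to psi. *)
Definition apply_oracle (C : numClosedFieldType) n k w (x : bits n)
    (psi : basis n k w -> C) : basis n k w -> C :=
  fun t => (-1) ^+ (\sum_(j < k) xq x (t.1 j))%N * psi t.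

Definition unit_state (C : numClosedFieldType) (T : finType) (psi : T -> C) :=
  \sum_(t : T) psi t * (psi t)^* = 1.

(* A two-outcome (projective) measurement {I - P, P}: P is an orthogonal
   projector (Hermitian and idempotent); outcome 1 corresponds to P. *)
Definition orth_projector (C : numClosedFieldType) (T : finType) (P : T -> T -> C) :=
  (forall a b, P a b = (P b a)^*) /\
  (forall a b, \sum_(c : T) P a c * P c b = P a b).

Definition prob1 (C : numClosedFieldType) (T : finType) (P : T -> T -> C) (phi : T -> C) : C :=
  \sum_(a : T) \sum_(b : T) (phi a)^* * P a b * phi b.

Definition na_exact (C : numClosedFieldType) n (f : bits n -> bool) (k : nat) : Prop :=
  exists (w : nat) (psi : basis n k w -> C) (P : basis n k w -> basis n k w -> C),
    unit_state psi /\ orth_projector P /\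
    forall x : bits n, prob1 P (apply_oracle x psi) = (f x)%:R.

(* Main.v *)
Require Import Defs.
From HB Require Import structures.
From mathcomp Require Import all_boot all_order all_algebra all_field.
From mathcomp Require Import ring.
Set Implicit Arguments. Unset Strict Implicit. Unset Printing Implicit Defensive.
Import Order.TTheory GRing.Theory Num.Theory.

Lemma odd_sum (I : finType) (P : pred I) (F : I -> nat) :
  odd (\sum_(i | P i) F i) = \big[addb/false]_(i | P i) odd (F i).
Proof.
by apply: (big_ind2 (fun a b => odd a = b)) => // a1 b1 a2 b2 <- <-; rewrite oddD.
Qed.

Lemma bdotE n (x s : bits n) : bdot x s = \big[addb/false]_(i < n) (x i && s i).
Proof. by rewrite /bdot odd_sum; apply: eq_bigr => i _; case: (_ && _). Qed.

Definition b0 n : bits n := [ffun => false].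

Lemma bdotC n (x s : bits n) : bdot x s = bdot s x.
Proof. by rewrite !bdotE; apply: eq_bigr => i _; rewrite andbC. Qed.

Lemma bdotDl n (x y s : bits n) : bdot (badd x y) s = bdot x s (+) bdot y s.
Proof.
rewrite !bdotE -big_split /=; apply: eq_bigr => i _; rewrite /badd ffunE.
by case: (x i); case: (y i); case: (s i).
Qed.

Lemma bdotDr n (x y s : bits n) : bdot s (badd x y) = bdot s x (+) bdot s y.
Proof. by rewrite bdotC bdotDl -!(bdotC s). Qed.

Lemma bdot0l n (s : bits n) : bdot (b0 n) s = false.
Proof. by rewrite bdotE big1 // => i _; rewrite ffunE. Qed.

Lemma baddC n (x y : bits n) : badd x y = badd y x.
Proof. by apply/ffunP => i; rewrite !ffunE addbC. Qed.
Lemma baddA n (x y z : bits n) : badd x (badd y z) = badd (badd x y) z.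
Proof. by apply/ffunP => i; rewrite !ffunE addbA. Qed.
Lemma baddK n (x y : bits n) : badd x (badd x y) = y.
Proof. by apply/ffunP => i; rewrite !ffunE addKb. Qed.
Lemma badd0 n (x : bits n) : badd x (b0 n) = x.
Proof. by apply/ffunP => i; rewrite !ffunE addbF. Qed.
Lemma baddxx n (x : bits n) : badd x x = b0 n.
Proof. by apply/ffunP => i; rewrite !ffunE addbb. Qed.
Lemma badd_inj n (x : bits n) : injective (badd x).
Proof. exact: (can_inj (baddK x)). Qed.

Definition delta n (i : 'I_n) : bits n := [ffun j => j == i].

Lemma bdot_delta n (i : 'I_n) v : bdot (delta i) v = v i.
Proof.
rewrite bdotE (bigD1 i) //= big1 ?addbF; first by rewrite ffunE eqxx.
by move=> j /negbTE ji; rewrite ffunE ji.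
Qed.

Lemma card_bits n : #|{: bits n}| = 2 ^ n.
Proof. by rewrite card_ffun card_bool card_ord. Qed.

Definition subgrp n (H : {set bits n}) :=
  b0 n \in H /\ forall x y, x \in H -> y \in H -> badd x y \in H.

Local Open Scope ring_scope.

Lemma sg_mul (C : numClosedFieldType) (a b : bool) :
  ((-1) ^+ a : C) * (-1) ^+ b = (-1) ^+ (a (+) b).
Proof. by rewrite signr_addb. Qed.

Lemma char_sum (C : numClosedFieldType) n (H : {set bits n}) (y : bits n) :
  subgrp H ->
  \sum_(h in H) ((-1) ^+ bdot y h : C) =
  if [forall h in H, ~~ bdot y h] then #|H|%:R else 0.
Proof.
move=> [H0 HD]; case: ifP => [/forall_inP hf|/negbT].
  by rewrite -sum1_card natr_sum; apply: eq_bigr => h hH; rewrite (negbTE (hf h hH)).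
rewrite negb_forall_in => /exists_inP [h0 h0H /negPn b0h].
set S := \sum_(h in H) _.
have : S = - S.
  rewrite {1}/S (reindex_inj (@badd_inj _ h0)) /= /S -sumrN.
  apply: eq_big => h.
    apply/idP/idP; first by move=> /(HD _ _ h0H); rewrite baddK.
    by move=> hH; apply: HD.
  by move=> _; rewrite bdotDr b0h signr_addb expr1 mulN1r.
move/eqP; rewrite -subr_eq0 opprK -mulr2n -mulr_natr mulf_eq0 pnatr_eq0 orbF.
by move/eqP.
Qed.

Lemma subgrpT n : subgrp [set: bits n].
Proof. by split => *; rewrite inE. Qed.

Lemma char_sumT (C : numClosedFieldType) n (v : bits n) :
  \sum_(z : bits n) ((-1) ^+ bdot z v : C) = if v == b0 n then (2 ^ n)%:R else 0.
Proof.
have := char_sum C v (subgrpT n).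
rewrite (eq_bigr (fun z => ((-1) ^+ bdot z v : C))); last by move=> z _; rewrite bdotC.
rewrite (eq_bigl (fun _ => true)); last by move=> z; rewrite inE.
move=> ->; case: (v =P b0 n) => [->|nv].
  rewrite ifT ?cardsT ?card_bits //; apply/forall_inP => h _; by rewrite bdot0l.
rewrite ifF //; apply/negbTE/forall_inP => hf; apply: nv; apply/ffunP => i.
by rewrite ffunE -bdot_delta bdotC; apply/negbTE/hf; rewrite inE.
Qed.

Lemma perp_subgrp n (S : {set bits n}) : subgrp (perp S).
Proof.
split; first by rewrite inE; apply/forall_inP => s _; rewrite bdot0l.
move=> x y; rewrite !inE => /forall_inP hx /forall_inP hy; apply/forall_inP => s sS.
by rewrite bdotDl (negbTE (hx s sS)) (negbTE (hy s sS)).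
Qed.

Lemma card_perp n (S : {set bits n}) : subgrp S -> (#|S| * #|perp S| = 2 ^ n)%N.
Proof.
move=> sgS; apply/eqP; rewrite -(@eqr_nat algC) natrM; apply/eqP.
pose F := fun (y s : bits n) => ((-1) ^+ bdot y s : algC).
have E1 : \sum_(y : bits n) \sum_(s in S) F y s = (#|S| * #|perp S|)%:R.
  rewrite (eq_bigr (fun y => if y \in perp S then #|S|%:R else 0)); last first.
    by move=> y _; rewrite char_sum // inE.
  by rewrite -big_mkcond /= sumr_const natrM mulr_natr.
have E2 : \sum_(y : bits n) \sum_(s in S) F y s = (2 ^ n)%:R.
  rewrite exchange_big /= (bigD1 (b0 n)) ?sgS.1 //= char_sumT eqxx big1 ?addr0 //.
  by move=> s /andP [_ /negbTE ns]; rewrite char_sumT ns.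
by rewrite -natrM -E1 E2.
Qed.

Lemma perp_perp n (S : {set bits n}) : subgrp S -> perp (perp S) = S.
Proof.
move=> sgS; apply/esym/eqP; rewrite eqEcard; apply/andP; split.
  apply/subsetP => s sS; rewrite inE; apply/forall_inP => y; rewrite inE.
  by move/forall_inP => /(_ s sS); rewrite bdotC.
have := card_perp sgS; have := card_perp (perp_subgrp S).
move=> <- /eqP; rewrite mulnC eqn_mul2l => /orP [|/eqP -> //].
by rewrite cards_eq0 => /eqP P0; move: (perp_subgrp S).1; rewrite P0 inE.
Qed.

Definition cnt n k (t : {ffun 'I_k -> 'I_n.+1}) (i : 'I_n) : nat :=
  #|[set j | t j == lift ord0 i]|.
Definition par n k (t : {ffun 'I_k -> 'I_n.+1}) : bits n := [ffun i => odd (cnt t i)].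

Lemma sum_lift n (b : 'I_n -> bool) (u : 'I_n.+1) :
  (\sum_(i < n) (b i && (u == lift ord0 i)))%N =
  match unlift ord0 u with Some j => b j | None => false end.
Proof.
case: unliftP => [j ->|->].
  rewrite (bigD1 j) //= eqxx andbT big1 ?addn0 // => i ij.
  by rewrite (inj_eq (@lift_inj _ ord0)) eq_sym (negbTE ij) andbF.
by rewrite big1 // => i _; rewrite (negbTE (neq_lift _ _)) andbF.
Qed.

Lemma cntE n k (t : {ffun 'I_k -> 'I_n.+1}) i :
  cnt t i = (\sum_(j < k) (t j == lift ord0 i))%N.
Proof. by rewrite /cnt cardsE -sum1_card big_mkcond. Qed.

Lemma phase n k (x : bits n) (t : {ffun 'I_k -> 'I_n.+1}) :
  odd (\sum_(j < k) xq x (t j)) = bdot x (par t).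
Proof.
have -> : (\sum_(j < k) xq x (t j) = \sum_(i < n) x i * cnt t i)%N.
  rewrite (eq_bigr (fun j => \sum_(i < n) (x i && (t j == lift ord0 i)))%N); last first.
    by move=> j _; rewrite sum_lift /xq; case: (unlift _ _).
  rewrite exchange_big /=; apply: eq_bigr => i _; rewrite cntE.
  by case: (x i); [rewrite mul1n | rewrite mul0n big1].
rewrite odd_sum bdotE; apply: eq_bigr => i _; by rewrite oddM ffunE; case: (x i).
Qed.

Lemma wt_par n k (t : {ffun 'I_k -> 'I_n.+1}) : (#|[set i | par t i]| <= k)%N.
Proof.
rewrite -sum1_card big_mkcond /=.
apply: (@leq_trans (\sum_(i < n) cnt t i)).
  apply: leq_sum => i _; rewrite inE ffunE.
  by case: (cnt t i) => [|m] //; case: ifP.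
rewrite (eq_bigr (fun i => \sum_(j < k) (true && (t j == lift ord0 i)))%N); last first.
  by move=> i _; rewrite cntE.
rewrite exchange_big /=; rewrite -[X in (_ <= X)%N]card_ord -sum1_card.
apply: leq_sum => j _; have E := sum_lift (fun=> true) (t j); simpl in E.
by rewrite E; case: (unlift _ _).
Qed.

Local Open Scope ring_scope.
Lemma phaseC (C : numClosedFieldType) n k (x : bits n) (t : {ffun 'I_k -> 'I_n.+1}) :
  ((-1) ^+ (\sum_(j < k) xq x (t j))%N : C) = (-1) ^+ bdot x (par t).
Proof. by rewrite -signr_odd phase. Qed.

Definition Pv (C : numClosedFieldType) (T : finType) (P : T -> T -> C) (v : T -> C) c :=
  \sum_(b : T) P c b * v b.

Lemma conj_Pv (C : numClosedFieldType) (T : finType) (P : T -> T -> C) v c :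
  orth_projector P -> (Pv P v c)^* = \sum_(a : T) (v a)^* * P a c.
Proof.
move=> [hP _]; rewrite /Pv rmorph_sum; apply: eq_bigr => a _.
by rewrite rmorphM /= -hP mulrC.
Qed.

Lemma prob1_norm (C : numClosedFieldType) (T : finType) (P : T -> T -> C) v :
  orth_projector P -> prob1 P v = \sum_(c : T) Pv P v c * (Pv P v c)^*.
Proof.
move=> hPP; have [hP hI] := hPP.
transitivity (\sum_(a : T) \sum_(b : T) \sum_(c : T) (v a)^* * P a c * (P c b * v b)).
  apply: eq_bigr => a _; apply: eq_bigr => b _.
  rewrite -hI mulr_sumr mulr_suml; apply: eq_bigr => c _; ring.
symmetry; under eq_bigr do rewrite conj_Pv // mulr_sumr.
rewrite exchange_big /=; apply: eq_bigr => a _.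
under eq_bigr do rewrite /Pv mulr_suml.
rewrite exchange_big /=; apply: eq_bigr => b _; apply: eq_bigr => c _; ring.
Qed.

Lemma proj_zero (C : numClosedFieldType) (T : finType) (P : T -> T -> C) v :
  orth_projector P -> prob1 P v = 0 -> forall c, Pv P v c = 0.
Proof.
move=> hPP; rewrite prob1_norm // => h0 c; apply/eqP; rewrite -mul_conjC_eq0.
by apply/eqP; apply: (psumr_eq0P _ h0) => // i _; apply: mul_conjC_ge0.
Qed.

Definition Qc (C : numClosedFieldType) (T : finType) (P : T -> T -> C) a b :=
  ((a == b)%:R - P a b : C).

Lemma dsum_l (C : numClosedFieldType) (T : finType) (a : T) (F : T -> C) :
  \sum_(c : T) (a == c)%:R * F c = F a.
Proof.
rewrite (bigD1 a) //= eqxx mul1r big1 ?addr0 // => c /negbTE ca.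
by rewrite eq_sym ca mul0r.
Qed.

Lemma dsum_r (C : numClosedFieldType) (T : finType) (b : T) (F : T -> C) :
  \sum_(c : T) F c * (c == b)%:R = F b.
Proof.
rewrite (bigD1 b) //= eqxx mulr1 big1 ?addr0 // => c /negbTE cb.
by rewrite cb mulr0.
Qed.

Lemma Qc_proj (C : numClosedFieldType) (T : finType) (P : T -> T -> C) :
  orth_projector P -> orth_projector (Qc P).
Proof.
move=> [hP hI]; split.
  by move=> a b; rewrite /Qc rmorphB /= -hP rmorph_nat eq_sym.
move=> a b; rewrite /Qc.
under eq_bigr do rewrite mulrBl !mulrBr.
rewrite !sumrB hI dsum_l dsum_r dsum_l.
have -> : (a == b)%:R = P a b + (a == b)%:R - P a b :> C by ring.
ring.
Qed.

Lemma prob1_Qc (C : numClosedFieldType) (T : finType) (P : T -> T -> C) v :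
  prob1 (Qc P) v = \sum_(a : T) (v a)^* * v a - prob1 P v.
Proof.
rewrite /prob1 -sumrB; apply: eq_bigr => a _.
rewrite /Qc; under eq_bigr do rewrite mulrBr mulrBl.
rewrite sumrB; congr (_ - _).
under eq_bigr do rewrite -mulrA; by rewrite -mulr_sumr dsum_l.
Qed.

Lemma ortho (C : numClosedFieldType) (T : finType) (P : T -> T -> C) (u v : T -> C) :
  orth_projector P -> prob1 P u = 0 -> prob1 P v = 1 ->
  \sum_(a : T) (v a)^* * v a = 1 ->
  \sum_(a : T) (u a)^* * v a = 0.
Proof.
move=> hPP pu pv nv.
have Qv : forall c, v c = Pv P v c.
  move=> c; have := proj_zero (Qc_proj hPP) (_ : prob1 (Qc P) v = 0) c.
  rewrite prob1_Qc nv pv subrr => /(_ erefl).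
  rewrite /Pv /Qc; under eq_bigr do rewrite mulrBl.
  by rewrite sumrB dsum_l => /eqP; rewrite subr_eq0 => /eqP.
have Pu := proj_zero hPP pu.
under eq_bigr do rewrite Qv /Pv mulr_sumr.
rewrite exchange_big /=; apply: big1 => b _.
under eq_bigr do rewrite mulrA.
rewrite -mulr_suml -conj_Pv // Pu.
by rewrite rmorph0 mul0r.
Qed.

Lemma Sf_subgrp n (f : bits n -> bool) : subgrp (Sf f).
Proof.
split; first by rewrite inE; apply/forallP => x; rewrite badd0.
move=> z1 z2; rewrite !inE => /forallP h1 /forallP h2; apply/forallP => x.
by rewrite (eqP (h1 x)) (eqP (h2 (badd x z1))) baddA.
Qed.

Lemma bigmin_le n (F : bits n -> nat) a : (\big[minn/n]_(x : bits n) F x <= F a)%N.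
Proof.
have : a \in index_enum (bits n) by rewrite mem_index_enum.
elim: (index_enum _) => [//|y r IH]; rewrite inE big_cons => /orP [/eqP ->|ar].
  exact: geq_minl.
by apply: leq_trans (geq_minr _ _) (IH ar).
Qed.

Lemma sg_sq (C : numClosedFieldType) (b : bool) : ((-1) ^+ b : C) * (-1) ^+ b = 1.
Proof. by rewrite -signr_addb addbb. Qed.

Lemma sg_conj (C : numClosedFieldType) (b : bool) : (((-1) ^+ b : C))^* = (-1) ^+ b.
Proof. by rewrite rmorph_sign. Qed.

Lemma par_eq_hdist n (a y : bits n) k (t : {ffun 'I_k -> 'I_n.+1}) :
  par t = badd a y -> (hdist a y <= k)%N.
Proof.
move=> hp; apply: leq_trans (wt_par t); rewrite /hdist hp.
apply: subset_leq_card; apply/subsetP => i; rewrite !inE ffunE.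
by case: (a i); case: (y i).
Qed.

Lemma lower (C : numClosedFieldType) n (f : bits n -> bool) k :
  na_exact C f k -> (minmax_dist (Sf f) <= k)%N.
Proof.
move=> [w [psi [P [hu [hPP hprob]]]]].
set S := Sf f.
pose phi x := apply_oracle x psi.
have phiE : forall x t, phi x t = (-1) ^+ bdot x (par t.1) * psi t.
  by move=> x t; rewrite /phi /apply_oracle phaseC.
pose p t := psi t * (psi t)^*.
pose g z := \sum_(t : basis n k w) p t * (-1) ^+ bdot z (par t.1).
have inner : forall x y, \sum_t (phi y t)^* * phi x t = g (badd x y).
  move=> x y; apply: eq_bigr => t _; rewrite !phiE rmorphM /= sg_conj bdotDl -sg_mul.
  rewrite /p; ring.
have nrm : forall x, \sum_t (phi x t)^* * phi x t = 1.
  move=> x; rewrite inner baddxx /g -hu; apply: eq_bigr => t _.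
  by rewrite bdot0l expr0 mulr1 /p.
have g0 : forall z, z \notin S -> g z = 0.
  move=> z; rewrite inE negb_forall => /existsP [x /negP hx].
  have e : badd x (badd x z) = z by rewrite baddK.
  have := hprob x; have := hprob (badd x z).
  case Ex : (f x); case Ey : (f (badd x z)); rewrite ?Ex ?Ey in hx => //.
    move=> py px; rewrite -e -inner.
    by apply: (ortho hPP py px (nrm _)).
  move=> py px; rewrite -e baddC -inner.
  by apply: (ortho hPP px py (nrm _)).
pose Q v := \sum_(t : basis n k w) p t * (par t.1 == v)%:R.
have fourier : forall v, \sum_(z in S) g z * (-1) ^+ bdot z v = (2 ^ n)%:R * Q v.
  move=> v; rewrite big_mkcond /=.
  rewrite (eq_bigr (fun z => g z * (-1) ^+ bdot z v)); last first.
    by move=> z _; case: ifP => // /negbT /g0 ->; rewrite mul0r.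
  rewrite /g; under eq_bigr do rewrite mulr_suml.
  rewrite exchange_big /= /Q mulr_sumr; apply: eq_bigr => t _.
  under eq_bigr do rewrite -mulrA sg_mul -bdotDr.
  rewrite -mulr_sumr char_sumT.
  have -> : (badd (par t.1) v == b0 n) = (par t.1 == v).
    apply/eqP/eqP => [h|->]; last by rewrite baddxx.
    by rewrite -(baddK (par t.1) v) h badd0.
  by case: (_ == v); rewrite ?mulr1 ?mulr0 ?mul1r ?mul0r // mulrC.
have shift : forall v y, y \in perp S -> Q (badd v y) = Q v.
  move=> v y; rewrite inE => /forall_inP hy.
  have : (2 ^ n)%:R * Q (badd v y) = (2 ^ n)%:R * Q v :> C.
    rewrite -!fourier; apply: eq_bigr => z zS.
    by rewrite bdotDr (bdotC z y) (negbTE (hy z zS)) addbF.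
  by move/(mulfI _); apply; rewrite pnatr_eq0 expn_eq0.
have p0 : forall t, 0 <= p t by move=> t; apply: mul_conjC_ge0.
have [t0 pt0] : exists t0, p t0 != 0.
  apply/existsP; apply: contraT; rewrite negb_exists => /forallP hz.
  move: hu; rewrite /unit_state big1 => [/esym/eqP|t _]; first by rewrite oner_eq0.
  by move: (hz t); rewrite negbK => /eqP.
set a := par t0.1.
have Qa : Q a != 0.
  apply/eqP => Q0.
  have h := psumr_eq0P (fun t _ => mulr_ge0 (p0 t) (ler0n _ _)) Q0.
  move: (h t0 isT); rewrite /a eqxx mulr1 => /eqP; rewrite (negbTE pt0).
  by [].
rewrite /minmax_dist; apply: leq_trans (bigmin_le _ a) _.
apply/bigmax_leqP => y yY.
have Qy : Q (badd a y) != 0 by rewrite shift.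
case: (pickP (fun t : basis n k w => par t.1 == badd a y)) => [t /eqP ht|none].
  exact: par_eq_hdist ht.
by move/eqP: Qy; rewrite /Q big1 // => t _; rewrite none mulr0.
Qed.

Definition tv n K (v : bits n) : {ffun 'I_K -> 'I_n.+1} :=
  [ffun j : 'I_K => nth ord0 (map (lift ord0) (enum [set i | v i])) j].

Lemma par_tv n K (v : bits n) : (#|[set i | v i]| <= K)%N -> par (tv K v) = v.
Proof.
move=> hK; apply/ffunP => i; rewrite ffunE cntE.
set s' := map (lift ord0) (enum [set i | v i]).
have hs : (size s' <= K)%N by rewrite size_map -cardE.
rewrite (eq_bigr (fun j : 'I_K => (nth ord0 s' j == lift ord0 i) : nat)); last first.
  by move=> j _; rewrite ffunE.
rewrite -(big_mkord xpredT (fun j => (nth ord0 s' j == lift ord0 i) : nat)).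
rewrite (@big_cat_nat _ _ _ (size s') 0 K _ _ (leq0n _) hs) /= [X in (_ + X)%N]big1_seq ?addn0; last first.
  move=> j /andP [_]; rewrite mem_index_iota => /andP [hj _].
  by rewrite nth_default // eq_sym (negbTE (neq_lift _ _)).
rewrite -(big_nth ord0 xpredT (fun x => (x == lift ord0 i) : nat)).
have -> : (\sum_(x <- s') (x == lift ord0 i) = count (pred1 (lift ord0 i)) s')%N.
  by elim: (s') => [|x s IH]; rewrite ?big_nil // big_cons IH.
rewrite count_map (eq_count (a2 := pred1 i)); last first.
  by move=> x /=; rewrite (inj_eq (@lift_inj _ ord0)).
by rewrite count_uniq_mem ?enum_uniq // mem_enum inE oddb.
Qed.

Lemma bigmin_attained n (F : bits n -> nat) :
  (forall x, F x <= n)%N -> exists a, \big[minn/n]_(x : bits n) F x = F a.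
Proof.
move=> hF.
have H : \big[minn/n]_(x : bits n) F x = n \/ exists a, \big[minn/n]_(x : bits n) F x = F a.
  elim: (index_enum _) => [|y r [IH|[a IH]]]; first by left; rewrite big_nil.
    by right; exists y; rewrite big_cons IH; apply/minn_idPl.
  by right; rewrite big_cons IH /minn; case: ifP => _; [exists y | exists a].
case: H => [E|//]; exists (b0 n); rewrite E; apply/eqP; rewrite eqn_leq hF /=.
by rewrite andbT -{1}E bigmin_le.
Qed.

Lemma upper (C : numClosedFieldType) n (f : bits n -> bool) :
  na_exact C f (minmax_dist (Sf f)).
Proof.
set S := Sf f; set K := minmax_dist S.
pose Y := perp S.
have sgS : subgrp S := Sf_subgrp f.
have sgY : subgrp Y := perp_subgrp S.
have sgPY : subgrp (perp Y) := perp_subgrp Y.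
have PY : perp Y = S := perp_perp sgS.
have hd : forall x y : bits n, (hdist x y <= n)%N.
  by move=> x y; rewrite /hdist -[X in (_ <= X)%N](card_ord n) max_card.
have [a0 Ka] : exists a, K = \max_(y in Y) hdist a y.
  rewrite /K /minmax_dist; apply: bigmin_attained => x.
  by apply/bigmax_leqP => y _; apply: hd.
have wtY : forall y, y \in Y -> (#|[set i | badd a0 y i]| <= K)%N.
  move=> y yY; rewrite Ka.
  have h : (hdist a0 y <= \max_(y in Y) hdist a0 y)%N by apply: leq_bigmax_cond.
  apply: leq_trans h.
  apply: subset_leq_card; apply/subsetP => i; rewrite !inE ffunE.
  by case: (a0 i); case: (y i).
pose emb (v : bits n) : basis n K 1 := (tv K v, ord0).
have par_emb : forall y, y \in Y -> par (emb (badd a0 y)).1 = badd a0 y.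
  by move=> y yY; apply: par_tv; apply: wtY.
pose Im := [set emb (badd a0 y) | y in Y].
have injE : {in Y &, injective (fun y => emb (badd a0 y))}.
  move=> y1 y2 h1 h2 e; have := congr1 (fun t => par t.1) e.
  by rewrite /= !par_emb // => /badd_inj.
pose N : C := #|Y|%:R; pose M : C := #|perp Y|%:R.
have N0 : N != 0.
  by rewrite pnatr_eq0 -lt0n card_gt0; apply/set0Pn; exists (b0 n); exact: sgY.1.
have M0 : M != 0.
  by rewrite pnatr_eq0 -lt0n card_gt0; apply/set0Pn; exists (b0 n); exact: sgPY.1.
pose e (x : bits n) (t : basis n K 1) : C := (t \in Im)%:R * (-1) ^+ bdot x (par t.1).
have sumIm : forall G : basis n K 1 -> C,
    \sum_t (t \in Im)%:R * G t = \sum_(y in Y) G (emb (badd a0 y)).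
  move=> G; rewrite -(big_imset G injE) /= -/Im [RHS]big_mkcond /=; apply: eq_bigr => t _.
  by case: (t \in Im); rewrite ?mul1r ?mul0r.
have ip : forall x w, \sum_t e x t * e w t =
    (-1) ^+ bdot (badd x w) a0 * (if badd x w \in perp Y then N else 0).
  move=> x w.
  rewrite (eq_bigr (fun t => (t \in Im)%:R * (-1) ^+ bdot (badd x w) (par t.1))); last first.
    by move=> t _; rewrite /e; case: (t \in Im); rewrite ?mul1r ?mul0r // sg_mul bdotDl.
  rewrite sumIm (eq_bigr (fun y => (-1) ^+ bdot (badd x w) a0 * (-1) ^+ bdot (badd x w) y)); last first.
    by move=> y yY; rewrite par_emb // bdotDr -sg_mul.
  by rewrite -mulr_sumr char_sum // inE.
have e_real : forall x t, (e x t)^* = e x t.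
  by move=> x t; rewrite /e rmorphM rmorph_nat rmorph_sign.
have shiftE : forall x u t, u \in perp Y -> e (badd x u) t * (-1) ^+ bdot u a0 = e x t.
  move=> x u t; rewrite inE => /forall_inP hu; rewrite /e.
  case tI : (t \in Im); last by rewrite !mul0r.
  move/imsetP: tI => [y yY ->]; rewrite !mul1r par_emb // bdotDl bdotDr.
  rewrite [bdot u (badd a0 y)]bdotDr (negbTE (hu y yY)) addbF signr_addb -mulrA sg_sq.
  by rewrite mulr1.
have RX : forall z (G : bits n -> C), \sum_(x | f x) (if badd z x \in perp Y then G x else 0)
    = (f z)%:R * \sum_(u in perp Y) G (badd z u).
  move=> z G; rewrite big_mkcond /= (reindex_inj (@badd_inj _ z)) /= mulr_sumr.
  rewrite [RHS]big_mkcond /=; apply: eq_bigr => u _; rewrite baddK.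
  case uP : (u \in perp Y); last by case: (f _); rewrite ?mulr0.
  move: uP; rewrite PY inE => /forallP /(_ z) /eqP <-.
  by case: (f z); rewrite ?mul1r ?mul0r.
pose c := sqrtC (N^-1).
have cr : c^* = c.
  by apply: conj_Creal; apply: sqrtC_real; rewrite invr_ge0 ler0n.
have cc : c * c = N^-1 by rewrite -expr2 sqrtCK.
pose beta := (N * M)^-1.
have br : beta^* = beta by rewrite /beta fmorphV rmorphM !rmorph_nat.
exists 1%N, (fun t => c * e (b0 n) t), (fun t t' => beta * \sum_(x | f x) e x t * e x t').
split; [|split; [split|]].
- rewrite /unit_state; under eq_bigr do rewrite rmorphM /= cr e_real.
  transitivity (c * c * \sum_t e (b0 n) t * e (b0 n) t).
    by rewrite mulr_sumr; apply: eq_bigr => t _; ring.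
  by rewrite ip baddxx bdot0l (proj1 sgPY) expr0 mul1r cc mulVf.
- move=> a b; rewrite rmorphM /= br rmorph_sum; congr (_ * _); apply: eq_bigr => x _.
  by rewrite rmorphM /= !e_real mulrC.
- move=> a b.
  transitivity (beta * beta * \sum_(x | f x) \sum_(x' | f x')
      e x a * e x' b * \sum_c e x c * e x' c).
    under eq_bigr do rewrite mulrACA big_distrlr /=.
    rewrite -mulr_sumr; congr (_ * _).
    rewrite exchange_big /=; apply: eq_bigr => x fx; rewrite exchange_big /=.
    apply: eq_bigr => x' fx'; rewrite mulr_sumr; apply: eq_bigr => c0 _; ring.
  transitivity (beta * beta * \sum_(x | f x) (M * N) * (e x a * e x b)).
    congr (_ * _); apply: eq_bigr => x fx.
    rewrite (eq_bigr (fun x' => if badd x x' \in perp Y then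
        e x a * N * (e x' b * (-1) ^+ bdot (badd x x') a0) else 0)); last first.
      by move=> x' _; rewrite ip; case: ifP => _; rewrite ?mulr0 //; ring.
    rewrite RX fx mul1r.
    rewrite (eq_bigr (fun u => e x a * N * e x b)); last first.
      by move=> u uP; rewrite baddK shiftE.
    rewrite sumr_const -mulr_natr -/M; ring.
  have bMN : beta * (M * N) = 1 by rewrite /beta [M * N]mulrC mulVf // mulf_neq0.
  by rewrite -mulr_sumr mulrA -[beta * beta * _]mulrA bMN mulr1.
- move=> z.
  have phiE : forall t, apply_oracle z (fun t => c * e (b0 n) t) t = c * e z t.
    move=> t; rewrite /apply_oracle phaseC /e bdot0l expr0 mulr1 mulrCA.
    by congr (_ * _); apply: mulrC.
  rewrite /prob1.
  under eq_bigr do under eq_bigr do rewrite !phiE rmorphM /= cr e_real.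
  transitivity (\sum_a \sum_b \sum_(x | f x) c * c * beta * (e z a * e x a) * (e x b * e z b)).
    apply: eq_bigr => a _; apply: eq_bigr => b _.
    rewrite !mulr_sumr mulr_suml; apply: eq_bigr => x _; ring.
  transitivity (c * c * beta * \sum_(x | f x) (\sum_a e z a * e x a) * (\sum_b e x b * e z b)).
    symmetry; rewrite mulr_sumr.
    under eq_bigr do rewrite big_distrlr /= mulr_sumr.
    rewrite exchange_big /=; apply: eq_bigr => a _.
    under eq_bigr do rewrite mulr_sumr.
    rewrite exchange_big /=; apply: eq_bigr => b _; apply: eq_bigr => x _; ring.
  rewrite (eq_bigr (fun x => if badd z x \in perp Y then N * N else 0)); last first.
    move=> x _; rewrite !ip [badd x z]baddC; case: ifP => _; rewrite ?mulr0 //.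
    by rewrite mulrACA sg_sq mul1r.
  rewrite RX sumr_const -mulr_natr -/M cc /beta.
  by field; rewrite N0 M0.
Qed.

Theorem theorem7p2 (C : numClosedFieldType) (n : nat) (f : bits n -> bool) :
  na_exact C f (minmax_dist (Sf f)) /\
  (forall k : nat, na_exact C f k -> (minmax_dist (Sf f) <= k)%N).
Proof.
split; first exact: upper.
by move=> k; apply: lower.
Qed.
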